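(* Fix a positive integer $n$ and a nonzero $n$-partition $\lambda$ with $\lambda_n=0$. For every $n$-semistandard tableau $T$ of shape $\lambda$, the final permutation $\pi_T$ of the greedy procedure lies in $S_n^\lambda$.
   Context: Identify $\lambda=(\lambda_1,\dots,\lambda_n)$ with its Young diagram; $c_j$ is the length of column $j$; $\zeta_1<\dots<\zeta_d$ are the distinct column lengths, $\zeta_0:=0$, $\zeta_{d+1}:=n$. $S_n^\lambda$ is the set of permutations $\phi$ (one-line form) with $\phi_{\zeta_{h-1}+1}<\dots<\phi_{\zeta_h}$ for $1\le h\le d+1$. Write $(j,i)$ for the box in column $j$, row $i$. Reading order: $(l,k)\le(j,i)$ iff $l<j$, or $l=j$ and $k\ge i$; convention $(j,c_j+1)$ means $(j-1,1)$. An $n$-semistandard tableau $T$ of shape $\lambda$ has entries in $[n]$, weakly increasing along rows, strictly increasing down columns; $T(j,i)$ is its entry, $C_j$ its $j$-th column. Greedy procedure: $\pi^{(1,1)}$ has first $c_1$ entries those of $C_1$ increasing, followed by the rest of $[n]$ increasing. For $(j,i)$ with $j\ge2$ in reading order from $(2,c_2)$ to $(\lambda_1,1)$, define $\pi^{(j,i)}$ from $\pi:=\pi^{(j,i+1)}$: if $T(j-1,i)=T(j,i)$ set $\pi^{(j,i)}=\pi$; otherwise let $i_0=i$, and given $i_{x-1}$ with $\pi_{i_{x-1}}<T(j,i)$ let $i_x$ be the smallest index $>c_j$ with $\pi_{i_{x-1}}<\pi_{i_x}\le T(j,i)$, stopping at $i_m$ with $\pi_{i_m}=T(j,i)$; set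 $\pi^{(j,i)}_{i_x}=\pi_{i_{x-1}}$ ($1\le x\le m$), $\pi^{(j,i)}_{i_0}=\pi_{i_m}$, others unchanged. $\pi_T:=\pi^{(\lambda_1,1)}$. *)

(* Defs.v *)
From mathcomp Require Import all_boot.
Set Implicit Arguments. Unset Strict Implicit. Unset Printing Implicit Defensive.

(* Conventions: rows i and columns j are 1-indexed; a partition lambda is a
   seq of length n (lambda_i = nth 0 lambda (i-1)); permutations of [n] are
   given in one-line form as seqs (phi_k = nth 0 phi (k-1)). *)

Definition lam (lambda : seq nat) (i : nat) : nat := nth 0 lambda i.-1.

Definition is_npartition (n : nat) (lambda : seq nat) : bool :=
  (size lambda == n) && sorted geq lambda.

Definition nonzero_partition (lambda : seq nat) : bool := has (fun x => 0 < x) lambda.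

Definition ncols (lambda : seq nat) : nat := head 0 lambda.

Definition collen (lambda : seq nat) (j : nat) : nat := count (fun l => j <= l) lambda.

(* box (j,i) : column j, row i *)
Definition in_diagram (n : nat) (lambda : seq nat) (j i : nat) : bool :=
  [&& 1 <= i, i <= n, 1 <= j & j <= lam lambda i].

(* T j i = entry of T in column j, row i *)
Definition is_ssyt (n : nat) (lambda : seq nat) (T : nat -> nat -> nat) : Prop :=
  (forall j i, in_diagram n lambda j i -> 1 <= T j i <= n) /\
  (forall j i, in_diagram n lambda j i -> in_diagram n lambda j.+1 i ->
     T j i <= T j.+1 i) /\
  (forall j i, in_diagram n lambda j i -> in_diagram n lambda j i.+1 ->
     T j i < T j i.+1).

Definition is_perm_seq (n : nat) (phi : seq nat) : bool := perm_eq phi (iota 1 n).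

Definition zetas (n : nat) (lambda : seq nat) : seq nat :=
  0 :: sort leq (undup [seq collen lambda j | j <- iota 1 (ncols lambda)]) ++ [:: n].

Definition zblock (n : nat) (lambda : seq nat) (phi : seq nat) (h : nat) : seq nat :=
  let z := zetas n lambda in
  take (nth 0 z h - nth 0 z h.-1) (drop (nth 0 z h.-1) phi).

Definition in_Snlam (n : nat) (lambda : seq nat) (phi : seq nat) : bool :=
  is_perm_seq n phi &&
  all (fun h => sorted ltn (zblock n lambda phi h)) (iota 1 (size (zetas n lambda)).-1).

Definition pi_at (p : seq nat) (k : nat) : nat := nth 0 p k.-1.

(* the chain i_0 = cur, i_1, ..., i_m (None if ill-defined) *)
Fixpoint gchain (n : nat) (fuel : nat) (p : seq nat) (t cj cur : nat)
  : option (seq nat) :=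
  match fuel with
  | 0 => None
  | fuel'.+1 =>
    if pi_at p cur == t then Some [:: cur]
    else if pi_at p cur < t then
      match [seq k <- iota cj.+1 (n - cj) |
               (pi_at p cur < pi_at p k) && (pi_at p k <= t)] with
      | k :: _ => omap (cons cur) (gchain n fuel' p t cj k)
      | [::] => None
      end
    else None
  end.

(* pi'_{i_x} = pi_{i_{x-1}} (x>=1), pi'_{i_0} = pi_{i_m} *)
Definition cycle_apply (p : seq nat) (idx : seq nat) : seq nat :=
  foldl (fun q (kv : nat * nat) => set_nth 0 q kv.1.-1 kv.2) p
        (zip idx (rotr 1 [seq pi_at p k | k <- idx])).

Definition gstep (n : nat) (lambda : seq nat) (T : nat -> nat -> nat)
  (p : seq nat) (ji : nat * nat) : option (seq nat) :=
  let: (j, i) := ji in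
  if T j.-1 i == T j i then Some p
  else omap (cycle_apply p) (gchain n n.+1 p (T j i) (collen lambda j) i).

Definition pi_init (n : nat) (lambda : seq nat) (T : nat -> nat -> nat) : seq nat :=
  let C1 := [seq T 1 i | i <- iota 1 (collen lambda 1)] in
  sort leq C1 ++ [seq k <- iota 1 n | k \notin C1].

Definition greedy_order (lambda : seq nat) : seq (nat * nat) :=
  flatten [seq [seq (j, i) | i <- rev (iota 1 (collen lambda j))]
          | j <- iota 2 (ncols lambda).-1].

(* pi_T, or None if some step of the procedure is ill-defined *)
Definition piT (n : nat) (lambda : seq nat) (T : nat -> nat -> nat) : option (seq nat) :=
  foldl (fun o ji => obind (fun p => gstep n lambda T p ji) o)
        (Some (pi_init n lambda T)) (greedy_order lambda).

(* Main.v *)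
Require Import Defs.
From mathcomp Require Import all_boot zify.


Lemma nth_le_all (x : nat) (s : seq nat) i : all (fun y => y <= x) s -> nth 0 s i <= x.
Proof.
move=> /allP H; case: (ltnP i (size s)) => hi.
  by apply: H; apply: mem_nth.
by rewrite nth_default.
Qed.

Lemma count_geq_nth (s : seq nat) j k : sorted geq s -> 0 < j -> 0 < k ->
  (k <= count (fun l => j <= l) s) = (j <= nth 0 s k.-1).
Proof.
elim: s k => [|x s IH] k hs hj hk /=.
  by rewrite nth_nil; lia.
have hs' : sorted geq s := path_sorted hs.
have hall : all (fun y => y <= x) s.
  have htr : transitive geq by move=> a b c /= h1 h2; exact: leq_trans h2 h1.
  exact: (order_path_min htr hs).
have hle : forall i, nth 0 s i <= x by move=> i; apply: nth_le_all.
case hjx: (j <= x).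
  case: k hk => [//|[|k]] _ /=; first by rewrite hjx; lia.
  by rewrite add1n ltnS IH.
have hc : count (fun l => j <= l) s = 0.
  apply/eqP; rewrite -leqn0 leqNgt -has_count; apply/hasPn => y /(allP hall) hy.
  apply/negP => hjy; move: hjx; rewrite (leq_trans hjy hy) //.
rewrite hc /=.
case: k hk => [//|k] _ /=.
case: k => [|k] /=; first by rewrite hjx.
apply/esym/negbTE; rewrite -ltnNge; apply: (leq_ltn_trans (hle _)); lia.
Qed.

Lemma collen_le lambda j : collen lambda j <= size lambda.
Proof. exact: count_size. Qed.

Lemma collen_mono lambda j j' : j <= j' -> collen lambda j' <= collen lambda j.
Proof. move=> h; apply: sub_count => l /= hl; exact: leq_trans h hl. Qed.

Lemma in_diag n lambda j k : is_npartition n lambda -> 0 < j -> 0 < k ->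
  k <= collen lambda j -> in_diagram n lambda j k.
Proof.
move=> /andP [/eqP hs hsort] hj hk hkc.
have hkn : k <= n by rewrite -hs; apply: leq_trans hkc (collen_le _ _).
rewrite /in_diagram hj hk hkn /lam -count_geq_nth //.
Qed.

Definition Rch (n : nat) (p : seq nat) (t cj : nat) (a b : nat) : bool :=
  [&& cj < b, b <= n, pi_at p a < pi_at p b, pi_at p b <= t &
   all (fun k => ~~ ((pi_at p a < pi_at p k) && (pi_at p k <= t))) (iota cj.+1 (b - cj.+1))].

Lemma filter_iota_head (P : pred nat) len : forall s k r,
  [seq x <- iota s len | P x] = k :: r ->
  [/\ s <= k, k < s + len, P k & forall k', s <= k' < k -> ~~ P k'].
Proof.
elim: len => [|len IH] s k r //=.
case hP: (P s).
  move=> [<- _]; split => //; [lia| by move=> k'; lia].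
move=> /IH [h1 h2 h3 h4]; split => //; try lia.
move=> k' hk'; case: (k' =P s) => [->|ne]; first by rewrite hP.
apply: h4; lia.
Qed.

Lemma gchain_ok n p t cj : cj <= n -> (exists a, cj < a <= n /\ pi_at p a = t) ->
  forall fuel cur, pi_at p cur <= t -> t - pi_at p cur < fuel ->
  exists rest, gchain n fuel p t cj cur = Some (cur :: rest) /\
    path (Rch n p t cj) cur rest /\ pi_at p (last cur rest) = t.
Proof.
move=> hcj [a [ha hat]]; elim=> [|fuel IH] cur hle hf //=.
case: eqP => [heq|hne]; first by exists [::].
have hlt : pi_at p cur < t by rewrite ltn_neqAle hle andbT; apply/eqP.
rewrite hlt.
set L := [seq _ <- _ | _].
have : a \in L.
  by rewrite mem_filter mem_iota hat leqnn hlt /=; lia.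
case hL: L => [//|k r] _.
have [h1 h2 /andP [h3 h4] h5] := filter_iota_head _ _ _ _ _ hL.
have [rest [-> [hp hl]]] := IH k h4 ltac:(lia).
exists (k :: rest) => /=; split => //; split => //.
rewrite hp andbT /Rch h3 h4 /=; apply/andP; split; first lia.
apply/andP; split; first lia.
apply/allP => k' /[!mem_iota] hk'; apply: h5; lia.
Qed.

Definition Fset (q : seq nat) (kv : nat * nat) := set_nth 0 q kv.1.-1 kv.2.

Lemma foldl_set_nth (ks ws : seq nat) : forall q, uniq ks -> size ws = size ks ->
  all (fun k => 0 < k <= size q) ks ->
  size (foldl Fset q (zip ks ws)) = size q /\
  forall k, 0 < k -> pi_at (foldl Fset q (zip ks ws)) k =
    if k \in ks then nth 0 ws (index k ks) else pi_at q k.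
Proof.
elim: ks ws => [|k0 ks IH] [|w0 ws] q //=.
move=> /andP [hk0 hu] [hs] /andP [/andP [h0 h1] ha].
have hsz : size (set_nth 0 q k0.-1 w0) = size q.
  by rewrite size_set_nth; apply/maxn_idPr; lia.
have ha' : all (fun k => 0 < k <= size (set_nth 0 q k0.-1 w0)) ks by rewrite hsz.
have [IH1 IH2] := IH ws _ hu hs ha'.
split; first by rewrite IH1.
move=> k hk; rewrite IH2 // in_cons.
case: (k =P k0) => [->|ne] /=.
  by rewrite (negbTE hk0) /= eqxx /= /pi_at nth_set_nth /= eqxx.
have -> : (k0 == k) = false by apply/eqP => e; apply: ne.
case: ifP => // _.
by rewrite /pi_at nth_set_nth /=; case: eqP => //; lia.
Qed.

Definition sig (idx : seq nat) (k : nat) :=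
  if k \in idx then nth 0 (rotr 1 idx) (index k idx) else k.

Lemma cycle_apply_ok p idx : uniq idx -> all (fun k => 0 < k <= size p) idx ->
  size (cycle_apply p idx) = size p /\
  forall k, 0 < k -> pi_at (cycle_apply p idx) k = pi_at p (sig idx k).
Proof.
move=> hu ha.
have hsz : size (rotr 1 [seq pi_at p k | k <- idx]) = size idx by rewrite size_rotr size_map.
have [H1 H2] := foldl_set_nth idx (rotr 1 [seq pi_at p k | k <- idx]) p hu hsz ha.
split; first exact: H1.
move=> k hk; rewrite /cycle_apply -/Fset.
change (pi_at (foldl Fset p (zip idx (rotr 1 [seq pi_at p k | k <- idx]))) k = pi_at p (sig idx k)).
rewrite H2 // /sig; case: ifP => // hin.
rewrite -map_rotr (nth_map 0) // size_rotr index_mem //.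
Qed.

Lemma rotr1_nth (cur : nat) rest x : x <= size rest ->
  nth 0 (rotr 1 (cur :: rest)) x = if x == 0 then last cur rest else nth 0 (cur :: rest) x.-1.
Proof.
move=> hx; rewrite lastI rotr1_rcons.
case: x hx => [|x] hx //.
by rewrite /= nth_rcons size_belast hx.
Qed.

Lemma perm_uniq_iota (p : seq nat) n : perm_eq p (iota 1 n) -> uniq p.
Proof. by move=> /perm_uniq ->; apply: iota_uniq. Qed.

Lemma pi_range p n k : perm_eq p (iota 1 n) -> 0 < k <= n -> 0 < pi_at p k <= n.
Proof.
move=> hp hk; have hs := perm_size hp; rewrite size_iota in hs.
have : pi_at p k \in p by apply: mem_nth; lia.
by rewrite (perm_mem hp) mem_iota; lia.
Qed.

Lemma pi_inj p n a b : perm_eq p (iota 1 n) -> 0 < a <= n -> 0 < b <= n ->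
  pi_at p a = pi_at p b -> a = b.
Proof.
move=> hp ha hb; have hs := perm_size hp; rewrite size_iota in hs.
have /(uniqP 0) hu := perm_uniq_iota _ _ hp.
move=> h; have := hu a.-1 b.-1 ltac:(rewrite inE; lia) ltac:(rewrite inE; lia) h; lia.
Qed.

Lemma pi_surj p n v : perm_eq p (iota 1 n) -> 0 < v <= n ->
  exists a, 0 < a <= n /\ pi_at p a = v.
Proof.
move=> hp hv; have hs := perm_size hp; rewrite size_iota in hs.
have : v \in p by rewrite (perm_mem hp) mem_iota; lia.
move=> hin; exists (index v p).+1; split.
  by rewrite -hs index_mem hin.
by rewrite /pi_at /= nth_index.
Qed.

Lemma perm_crit (s : seq nat) n : size s = n ->
  (forall k, 0 < k <= n -> 0 < pi_at s k <= n) ->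
  (forall a b, 0 < a <= n -> 0 < b <= n -> pi_at s a = pi_at s b -> a = b) ->
  perm_eq s (iota 1 n).
Proof.
move=> hs hr hi.
have hu : uniq s.
  apply/(uniqP 0) => a b; rewrite !inE /= => ha hb e.
  have ha' : a < n by rewrite -hs. have hb' : b < n by rewrite -hs.
  have := hi a.+1 b.+1 ltac:(lia) ltac:(lia) e; lia.
have hsub : {subset s <= iota 1 n}.
  move=> x /(nthP 0) [m hm <-]; rewrite mem_iota.
  have hm' : m < n by rewrite -hs.
  have := hr m.+1 ltac:(lia); rewrite /pi_at /=; lia.
have [_ heq] := uniq_min_size hu hsub ltac:(rewrite size_iota hs //).
by apply: uniq_perm => //; apply: iota_uniq.
Qed.

Lemma col_strict n lambda T j a b : is_npartition n lambda -> is_ssyt n lambda T ->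
  0 < j -> 0 < a -> a < b -> b <= collen lambda j -> T j a < T j b.
Proof.
move=> hl [_ [_ hc]] hj ha; elim: b => [//|b IH] hab hb.
have hstep : T j b < T j b.+1.
  apply: hc; apply: in_diag => //; lia.
case: (a =P b) => [->//|ne].
apply: ltn_trans hstep; apply: IH; lia.
Qed.

Lemma path_all_tail (R : rel nat) (Q : pred nat) x s :
  (forall a b, R a b -> Q b) -> path R x s -> all Q s.
Proof.
move=> H; elim: s x => [//|y s IH] x /= /andP [h1 h2].
by rewrite (H _ _ h1) (IH _ h2).
Qed.

Arguments pi_range {p n k}. Arguments pi_inj {p n a b}. Arguments pi_surj {p n v}.
Arguments col_strict {n lambda T j a b}.
Arguments gchain_ok {n p t cj}.
Arguments cycle_apply_ok {p idx}.

Lemma sig_in idx k : k \in idx -> sig idx k \in idx.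
Proof.
move=> hk; rewrite /sig hk -(mem_rotr 1); apply: mem_nth.
by rewrite size_rotr index_mem.
Qed.

Lemma sig_out idx k : k \notin idx -> sig idx k = k.
Proof. by rewrite /sig => /negbTE ->. Qed.

Lemma sig_inj {idx a b} : uniq idx -> sig idx a = sig idx b -> a = b.
Proof.
move=> hu.
case ha: (a \in idx); case hb: (b \in idx).
- rewrite /sig ha hb => e.
  have /(uniqP 0) hr : uniq (rotr 1 idx) by rewrite rotr_uniq.
  have := hr (index a idx) (index b idx).
  rewrite !inE /= size_rotr !index_mem ha hb => /(_ isT isT e) ei.
  by rewrite -(nth_index 0 ha) -(nth_index 0 hb) ei.
- move=> e; have := sig_in idx a ha; rewrite e sig_out ?hb //.
- move=> e; have := sig_in idx b hb; rewrite -e sig_out ?ha //.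
- by rewrite !sig_out ?ha ?hb.
Qed.

Definition Inv n lambda (T : nat -> nat -> nat) j r (p : seq nat) :=
  [/\ size p = n, perm_eq p (iota 1 n),
   (forall k, 0 < k <= r -> pi_at p k = T j.-1 k),
   (forall k, r < k <= collen lambda j -> pi_at p k = T j k) &
   (forall k, collen lambda j < k -> k < n -> k \notin zetas n lambda ->
      pi_at p k < pi_at p k.+1)].

Lemma step_ok n lambda T j r p : is_npartition n lambda -> is_ssyt n lambda T ->
  1 < j -> r < collen lambda j -> Inv n lambda T j r.+1 p ->
  exists p', gstep n lambda T p (j, r.+1) = Some p' /\ Inv n lambda T j r p'.
Proof.
move=> hl hT hj hr [hs hp h1 h2 h3].
have hj1 : 0 < j.-1 by move: hj; case: (j) => [|[|jj]].
have hsl : size lambda = n by case/andP: hl => /eqP.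
have hcj : collen lambda j <= n by rewrite -hsl collen_le.
have hcj1 : collen lambda j <= collen lambda j.-1 by apply: collen_mono; lia.
have hd1 : in_diagram n lambda j.-1 r.+1 by apply: in_diag => //; lia.
have hd2 : in_diagram n lambda j r.+1 by apply: in_diag => //; lia.
have hrow : T j.-1 r.+1 <= T j r.+1.
  have := (hT.2.1) (j.-1) r.+1 hd1; rewrite prednK; last lia.
  by move=> H; apply: H.
have hv0 : pi_at p r.+1 = T j.-1 r.+1 by apply: h1; lia.
have ht : 0 < T j r.+1 <= n by apply: hT.1.
rewrite /gstep; case: eqP => heq.
  exists p; split => //; split => //.
    by move=> k hk; apply: h1; lia.
  move=> k hk; case: (k =P r.+1) => [->|ne]; first by rewrite hv0 heq.
  by apply: h2; lia.
set t := T j r.+1 in ht hrow heq *.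
set cj := collen lambda j in hr h2 h3 hcj hcj1 *.
have htd : t = T j r.+1 by []. clearbody t.
have hlt : pi_at p r.+1 < t by rewrite hv0; lia.
have [a [ha hat]] := pi_surj hp ht.
have hca : cj < a.
  rewrite ltnNge; apply/negP => hac.
  case: (ltngtP a r.+1) => hc.
  - have := h1 a ltac:(lia); rewrite hat => e.
    have hh : r.+1 <= collen lambda j.-1 by apply: leq_trans hcj1.
    have := col_strict (j := j.-1) (a := a) hl hT hj1 ltac:(lia) hc hh; lia.
  - have := h2 a ltac:(lia); rewrite hat => e.
    have := col_strict (j := j) (a := r.+1) (b := a) hl hT ltac:(lia) ltac:(lia) hc hac; rewrite -htd; lia.
  - by move: hat hlt; rewrite hc => ->; rewrite ltnn.
have hex : exists a, cj < a <= n /\ pi_at p a = t by exists a; split => //; lia.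
have hfuel : t - pi_at p r.+1 < n.+1 by lia.
have [rest [hg [hpath hlast]]] := gchain_ok hcj hex n.+1 r.+1 (ltnW hlt) hfuel.
rewrite hg /=.
set idx := r.+1 :: rest.
have hall : all (fun b => cj < b <= n) rest.
  apply: (path_all_tail _ _ _ _ _ hpath) => x y /and5P [? ? _ _ _]; lia.
have hvals : sorted ltn (map (pi_at p) idx).
  rewrite /= path_map; apply: sub_path hpath => x y /and5P [_ _ ? _ _] //.
have hu : uniq idx.
  apply: (map_uniq (f := pi_at p)); apply: (sorted_uniq ltn_trans ltnn hvals).
have hrange : all (fun k => 0 < k <= size p) idx.
  rewrite /= hs; apply/andP; split; first lia.
  by apply: sub_all hall => x; lia.
have [hs' hpi'] := cycle_apply_ok hu hrange.
exists (cycle_apply p idx); split => //.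
have hin_gt : forall k, k \in rest -> cj < k <= n by move=> k /(allP hall).
have hnotin : forall k, k <= cj -> k != r.+1 -> k \notin idx.
  move=> k hk hne; rewrite in_cons negb_or hne /=; apply/negP => /hin_gt /andP [h _]; by move: h; rewrite ltnNge hk.
have hsigi : sig idx r.+1 = last r.+1 rest.
  by rewrite /sig mem_head /= eqxx rotr1_nth.
have hR : forall x, 0 < x < size idx -> Rch n p t cj (nth 0 idx x.-1) (nth 0 idx x).
  move: hpath => /(pathP 0) H x hx; case: x hx => [|x] hx; first by case/andP: hx.
  by apply: H; case/andP: hx.
have hmono : forall x y, x < y -> y < size idx ->
    pi_at p (nth 0 idx x) < pi_at p (nth 0 idx y).
  move=> x y hxy hy.
  have := sorted_ltn_nth ltn_trans 0 hvals; rewrite size_map => H.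
  have hx : x < size idx := ltn_trans hxy hy.
  have := H x y hx hy hxy.
  by rewrite (nth_map 0 _ _ hy) (nth_map 0 _ _ hx).
have hsigk : forall k, k \in idx -> k != r.+1 ->
    0 < index k idx /\ sig idx k = nth 0 idx (index k idx).-1.
  move=> k hk hne.
  have hx0 : 0 < index k idx.
    rewrite lt0n; apply/negP => /eqP e.
    by move: (nth_index 0 hk); rewrite e /= => ek; move: hne; rewrite ek eqxx.
  split => //; rewrite /sig hk rotr1_nth; last first.
    by rewrite -ltnS -[X in _ < X]/(size idx) index_mem.
  by rewrite (negbTE (lt0n_neq0 hx0)).
have hidxr : forall k, k \in idx -> 0 < k <= n.
  move=> k; rewrite in_cons => /orP [/eqP ->|/hin_gt /andP [g1 g2]].
    by rewrite /= (leq_trans hr hcj).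
  by rewrite g2 andbT (leq_ltn_trans (leq0n cj) g1).
have hsigr : forall k, 0 < k <= n -> 0 < sig idx k <= n.
  move=> k hk; case hin: (k \in idx); first by apply: hidxr; apply: sig_in.
  by rewrite sig_out ?hin.
clear hrow heq hlt hfuel hca hcj1 hv0 hd1 hd2 hex hg hj1 hj hsl hrange.
split.
- by rewrite hs'.
- apply: perm_crit => [|k hk|x y hx hy]; first by rewrite hs'.
    by rewrite hpi'; [apply: (pi_range hp); apply: hsigr|lia].
  rewrite !hpi'; try lia.
  move=> e; apply: (sig_inj hu); exact: (pi_inj hp (hsigr _ hx) (hsigr _ hy) e).
- move=> k hk; rewrite hpi'; last lia.
  rewrite sig_out; first by apply: h1; lia.
  by apply: hnotin; [lia|apply/eqP; lia].
- move=> k hk; rewrite hpi'; last lia.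
  case: (k =P r.+1) => [->|ne]; first by rewrite hsigi hlast htd.
  rewrite sig_out; first by apply: h2; lia.
  by apply: hnotin; [lia|apply/eqP].
- move=> k hk hkn hz; rewrite !hpi'; try lia.
  have hold := h3 k hk hkn hz.
  have hk1 : k != r.+1 by apply/eqP; lia.
  have hk2 : k.+1 != r.+1 by apply/eqP; lia.
  case hin1 : (k \in idx); case hin2 : (k.+1 \in idx).
  + have [hx1 e1] := hsigk k hin1 hk1; have [hy1 e2] := hsigk k.+1 hin2 hk2.
    rewrite e1 e2.
    have hxs : index k idx < size idx by rewrite index_mem.
    have hys : index k.+1 idx < size idx by rewrite index_mem.
    have hxy : index k idx < index k.+1 idx.
      case: (ltngtP (index k idx) (index k.+1 idx)) => // c.
        by have := hmono _ _ c hxs; rewrite !nth_index // => /ltn_trans /(_ hold); rewrite ltnn.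
      have := nth_index 0 hin1; rewrite c nth_index // => e; clear -e; lia.
    apply: hmono; clear -hxy hx1 hys; lia.
  + have [hx1 e1] := hsigk k hin1 hk1.
    rewrite e1 (sig_out _ _ (negbT hin2)).
    have := hR (index k idx) ltac:(by rewrite hx1 index_mem); rewrite nth_index // => /and5P [_ _ hh _ _]; exact: ltn_trans hh hold.
  + rewrite (sig_out _ _ (negbT hin1)).
    have [hy1 e2] := hsigk k.+1 hin2 hk2.
    have hys : index k.+1 idx < size idx by rewrite index_mem.
    rewrite e2; set b := nth 0 idx (index k.+1 idx).-1.
    have hb : b \in idx by apply: mem_nth; apply: leq_ltn_trans (leq_pred _) hys.
    have := hR (index k.+1 idx) ltac:(by rewrite hy1 hys); rewrite nth_index // -/b.
    move=> /and5P [_ _ _ hle /allP hallk].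
    have hk' : cj < k := hk.
    have := hallk k ltac:(rewrite mem_iota; clear -hk'; lia).
    rewrite negb_and -!ltnNge => hor.
    have hne : pi_at p k != pi_at p b.
      apply/eqP => e; have ekb := pi_inj (a := k) (b := b) hp ltac:(by rewrite (leq_ltn_trans (leq0n _) hk) (ltnW hkn)) (hidxr _ hb) e.
      by move: hin1; rewrite ekb hb.
    case/orP: hor => hh; last by have := leq_trans hold hle; rewrite ltnNge (ltnW hh).
    by rewrite ltn_neqAle hne /= -ltnS.
  + by rewrite !sig_out ?hin1 ?hin2.
Qed.
Arguments step_ok {n lambda T j r p}.

Definition Fg n lambda T := fun (o : option (seq nat)) (ji : nat * nat) =>
  obind (fun p => gstep n lambda T p ji) o.

Lemma col_ok n lambda T j : is_npartition n lambda -> is_ssyt n lambda T -> 1 < j ->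
  forall r, r <= collen lambda j -> forall p, Inv n lambda T j r p ->
  exists p', foldl (Fg n lambda T) (Some p) [seq (j, i) | i <- rev (iota 1 r)] = Some p'
    /\ Inv n lambda T j 0 p'.
Proof.
move=> hl hT hj; elim=> [|r IH] hr p hI; first by exists p.
have [p1 [hs1 hI1]] := step_ok hl hT hj hr hI.
have -> : rev (iota 1 r.+1) = r.+1 :: rev (iota 1 r).
  by have := iotaD 1 r 1; rewrite addn1 add1n => ->; rewrite rev_cat.
have e : Fg n lambda T (Some p) (j, r.+1) = Some p1 by exact: hs1.
change (exists p', foldl (Fg n lambda T) (Fg n lambda T (Some p) (j, r.+1))
  [seq (j, i) | i <- rev (iota 1 r)] = Some p' /\ Inv n lambda T j 0 p').
rewrite e.
exact: IH (ltnW hr) p1 hI1.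
Qed.

Lemma collen_in_z n lambda j : 0 < j <= ncols lambda -> collen lambda j \in zetas n lambda.
Proof.
move=> hj; rewrite /zetas in_cons mem_cat mem_sort mem_undup.
apply/orP; right; apply/orP; left; apply: map_f; rewrite mem_iota; lia.
Qed.

Lemma trans_ok n lambda T j p : is_npartition n lambda -> is_ssyt n lambda T ->
  0 < j -> j < ncols lambda -> Inv n lambda T j 0 p ->
  Inv n lambda T j.+1 (collen lambda j.+1) p.
Proof.
move=> hl hT hj hjn [hs hp _ h2 h3].
have hc : collen lambda j.+1 <= collen lambda j by apply: collen_mono.
split => //.
- move=> k hk; rewrite /=; apply: h2; lia.
- move=> k hk; lia.
- move=> k hk hkn hz.
  case: (ltngtP (collen lambda j) k) => c.
  + exact: h3.
  + rewrite h2 ?h2; try lia.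
    apply: (col_strict (j := j) (a := k) (b := k.+1) hl hT); lia.
  + by move: hz; rewrite -c collen_in_z //; lia.
Qed.

Arguments col_ok {n lambda T j}. Arguments trans_ok {n lambda T j p}.

Lemma sorted_map_iota (f : nat -> nat) len : forall m,
  (forall k, m <= k -> k.+1 < m + len -> f k < f k.+1) -> sorted ltn (map f (iota m len)).
Proof.
elim: len => [|len IH] m H //=.
case: len IH H => [|len] IH H //=.
apply/andP; split; first by apply: H; lia.
by apply: (IH m.+1) => k h1 h2; apply: H; lia.
Qed.

Lemma sorted_from_adj (s : seq nat) :
  (forall i, i.+1 < size s -> nth 0 s i < nth 0 s i.+1) -> sorted ltn s.
Proof.
case: s => [//|x s] H /=; apply/(pathP 0) => i hi; exact: H.
Qed.

Lemma init_ok n lambda T : is_npartition n lambda -> is_ssyt n lambda T ->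
  Inv n lambda T 1 0 (pi_init n lambda T).
Proof.
move=> hl hT.
have hsl : size lambda = n by case/andP: hl => /eqP.
set c1 := collen lambda 1.
have hc1 : c1 <= n by rewrite -hsl collen_le.
set C1 := [seq T 1 i | i <- iota 1 c1].
have hC1s : sorted ltn C1.
  apply: sorted_map_iota => k h1 h2.
  apply: (col_strict (j := 1) (a := k) (b := k.+1) hl hT); lia.
have hC1u : uniq C1 by apply: (sorted_uniq ltn_trans ltnn hC1s).
have hC1r : {subset C1 <= iota 1 n}.
  move=> x /mapP [i]; rewrite mem_iota => hi ->; rewrite mem_iota.
  have := hT.1 1 i ltac:(apply: in_diag => //; lia); lia.
have hsort : sort leq C1 = C1.
  apply: (sorted_sort leq_trans); apply: (sub_sorted _ hC1s) => a b; exact: ltnW.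
have hperm : perm_eq (pi_init n lambda T) (iota 1 n).
  rewrite /pi_init -/c1 -/C1 hsort.
  have hp1 : perm_eq C1 [seq x <- iota 1 n | x \in C1].
    apply: uniq_perm => //; first by apply: filter_uniq; apply: iota_uniq.
    move=> x; rewrite mem_filter; case hx: (x \in C1) => //=; by rewrite hC1r.
  apply: perm_trans (perm_cat hp1 (perm_refl _)) _.
  by have /permPl := perm_filterC (fun x => x \in C1) (iota 1 n).
have hsz : size (pi_init n lambda T) = n by rewrite (perm_size hperm) size_iota.
have hsC1 : size C1 = c1 by rewrite size_map size_iota.
split => //.
- move=> k hk; lia.
- move=> k hk; rewrite /pi_at /pi_init -/c1 -/C1 hsort nth_cat hsC1.
  have -> : k.-1 < c1 by lia.
  rewrite (nth_map 0); last by rewrite size_iota; lia.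
  rewrite nth_iota; [congr T; lia | lia].
- move=> k hk hkn _; rewrite /pi_at /pi_init -/c1 -/C1 hsort !nth_cat hsC1.
  have -> : (k.-1 < c1) = false by lia.
  have -> : (k.+1.-1 < c1) = false by lia.
  set F := [seq _ <- _ | _].
  have hsF : size F = n - c1.
    have := hsz; rewrite /pi_init -/c1 -/C1 hsort size_cat hsC1 -/F => <-; rewrite addKn //.
  have hFs : sorted ltn F by apply: sorted_filter; [exact: ltn_trans|exact: iota_ltn_sorted].
  have H := @sorted_ltn_nth nat ltn ltn_trans 0 F hFs.
  apply: H; rewrite ?inE /= ?hsF; lia.
Qed.

Lemma zetas_sorted n lambda : is_npartition n lambda -> sorted leq (zetas n lambda).
Proof.
move=> hl; have hsl : size lambda = n by case/andP: hl => /eqP.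
rewrite /zetas /= cats1.
set U := undup _.
have hU : all (fun x => x <= n) (sort leq U).
  apply/allP => x; rewrite mem_sort mem_undup => /mapP [j _ ->].
  by rewrite -hsl collen_le.
have hs : sorted leq (sort leq U) by apply: sort_sorted; exact: leq_total.
rewrite rcons_path; apply/andP; split.
  by case: (sort leq U) hs => //.
have := mem_last 0 (sort leq U); rewrite in_cons => /orP [/eqP -> //|].
by move/(allP hU).
Qed.

Lemma final_ok n lambda T p : is_npartition n lambda -> is_ssyt n lambda T ->
  0 < ncols lambda -> Inv n lambda T (ncols lambda) 0 p -> in_Snlam n lambda p.
Proof.
move=> hl hT hn [hs hp _ h2 h3].
set J := ncols lambda in hn h2 h3 *.
have hadj : forall k, 0 < k -> k < n -> k \notin zetas n lambda -> pi_at p k < pi_at p k.+1.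
  move=> k hk hkn hz.
  case: (ltngtP (collen lambda J) k) => c.
  + exact: h3.
  + rewrite h2 ?h2; try lia.
    apply: (col_strict (j := J) (a := k) (b := k.+1) hl hT); lia.
  + by move: hz; rewrite -c collen_in_z //; lia.
rewrite /in_Snlam /is_perm_seq hp /=.
apply/allP => h; rewrite mem_iota => hh.
set z := zetas n lambda.
have hzs : sorted leq z by apply: zetas_sorted.
have hmz := sorted_leq_nth leq_trans leqnn 0 hzs.
have hhz : h < size z by move: hh; rewrite /z /zetas /=; lia.
rewrite /zblock -/z; apply: sorted_from_adj => i hi.
set d := nth 0 z h.-1; set e := nth 0 z h.
have hi' : i.+1 < e - d /\ d + i.+1 < n.
  move: hi; rewrite size_take size_drop hs; case: ifP; lia.
rewrite !nth_take; try lia.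
rewrite !nth_drop.
have := hadj (d + i).+1 ltac:(lia) ltac:(lia).
rewrite /pi_at /= addnS; apply.
apply/negP => hin.
have hl1 := nth_index 0 hin; set l := index _ z in hl1.
have hls : l < size z by rewrite index_mem.
case: (leqP l h.-1) => c.
  have := hmz l h.-1 ltac:(rewrite inE; lia) ltac:(rewrite inE; lia) c.
  rewrite hl1 -/d; lia.
have := hmz h l ltac:(rewrite inE; lia) ltac:(rewrite inE; lia) ltac:(lia).
rewrite hl1 -/e; lia.
Qed.

Arguments init_ok {n lambda T}. Arguments final_ok {n lambda T p}.

Lemma cols_ok n lambda T : is_npartition n lambda -> is_ssyt n lambda T ->
  forall m, m < ncols lambda ->
  exists p, foldl (Fg n lambda T) (Some (pi_init n lambda T))
    (flatten [seq [seq (j, i) | i <- rev (iota 1 (collen lambda j))] | j <- iota 2 m])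
    = Some p /\ Inv n lambda T m.+1 0 p.
Proof.
move=> hl hT; elim=> [|m IH] hm.
  by exists (pi_init n lambda T); split => //; apply: init_ok.
have [p [hp hI]] := IH (ltnW hm).
have -> : iota 2 m.+1 = iota 2 m ++ [:: m.+2].
  by have := iotaD 2 m 1; rewrite addn1 add2n.
rewrite map_cat flatten_cat foldl_cat hp /= cats0.
have hI' := trans_ok hl hT (ltn0Sn m) hm hI.
have [p' [hp' hI'']] := col_ok hl hT (isT : 1 < m.+2) _ (leqnn _) _ hI'.
by exists p'.
Qed.

Theorem corollary4p2 (n : nat) (lambda : seq nat) (T : nat -> nat -> nat) :
  0 < n ->
  is_npartition n lambda ->
  nonzero_partition lambda ->
  lam lambda n = 0 ->
  is_ssyt n lambda T ->
  exists p, piT n lambda T = Some p /\ in_Snlam n lambda p.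
Proof.
move=> hn hl hnz _ hT.
have hc : 0 < ncols lambda.
  move: hl hnz; rewrite /is_npartition /nonzero_partition /ncols.
  case: (lambda) => [//|x s] /andP [_ hs] /hasP [y].
  have htr : transitive geq by move=> a b c /= h1 h2; exact: leq_trans h2 h1.
  have := order_path_min htr hs => /allP ha.
  rewrite in_cons => /orP [/eqP -> //|/ha hy hy0] /=.
  exact: leq_trans hy0 hy.
have [p [hp hI]] := cols_ok n lambda T hl hT (ncols lambda).-1 ltac:(by rewrite ltn_predL).
rewrite prednK // in hI.
exists p; split; last exact: final_ok hl hT hc hI.
exact: hp.
Qed.
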